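(* Let $\mathcal{A}$ be a finite set of non-commuting variables with at least two elements, let $a\in\mathcal{A}$, and let $P\in\mathbb{Q}\langle\mathcal{A}\rangle$ be such that for every $k\ge 0$ the coefficient of the word $a^k$ in $P$ is zero. If $\mathrm{ad}_a(P)=[a,P]=aP-Pa$ is a Lie polynomial, i.e. $[a,P]\in\mathcal{L}_\mathbb{Q}(\mathcal{A})$, then $P$ is a Lie polynomial, i.e. $P\in\mathcal{L}_\mathbb{Q}(\mathcal{A})$.
   Context: $\mathbb{Q}\langle\mathcal{A}\rangle$ is the ring of polynomials with rational coefficients in the non-commuting variables $\mathcal{A}$ (finite linear combinations of words in $\mathcal{A}$, including the empty word), with commutator $[X,Y]=XY-YX$. $\mathcal{L}_\mathbb{Q}(\mathcal{A})$ is the smallest $\mathbb{Q}$-subspace of $\mathbb{Q}\langle\mathcal{A}\rangle$ containing $\mathcal{A}$ and closed under commutators; its elements are called Lie polynomials. *)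

(* Defs.v *)
(* Non-commutative polynomials Q<A> over a finite alphabet A
   are represented by their coefficient functions  seq A -> rat  (words are
   sequences of letters, the empty word is [::]); membership in Q<A> is the
   finite-support condition [ncfin]. *)
From mathcomp Require Import all_boot all_order all_algebra.
Set Implicit Arguments. Unset Strict Implicit. Unset Printing Implicit Defensive.
Import GRing.Theory.
Local Open Scope ring_scope.

Section NC.
Variable A : finType.

Definition ncpoly := seq A -> rat.

Definition ncfin (P : ncpoly) : Prop :=
  exists s : seq (seq A), forall w, w \notin s -> P w = 0.

Definition ncmul (P Q : ncpoly) : ncpoly :=
  fun w => \sum_(i < (size w).+1) P (take i w) * Q (drop i w).

Definition ncadd (P Q : ncpoly) : ncpoly := fun w => P w + Q w.
Definition ncscale (c : rat) (P : ncpoly) : ncpoly := fun w => c * P w.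
Definition nczero : ncpoly := fun _ => 0.

Definition ncletter (x : A) : ncpoly := fun w => if w == [:: x] then 1 else 0.

Definition ncbracket (P Q : ncpoly) : ncpoly :=
  fun w => ncmul P Q w - ncmul Q P w.

Inductive is_lie : ncpoly -> Prop :=
| lie_letter x : is_lie (ncletter x)
| lie_zero : is_lie nczero
| lie_add P Q : is_lie P -> is_lie Q -> is_lie (ncadd P Q)
| lie_scale c P : is_lie P -> is_lie (ncscale c P)
| lie_bracket P Q : is_lie P -> is_lie Q -> is_lie (ncbracket P Q)
| lie_ext P Q : is_lie P -> (forall w, P w = Q w) -> is_lie Q.

End NC.

(* Main.v *)
Require Import Defs.
From mathcomp Require Import all_boot all_order all_algebra.
From mathcomp Require Import finmap.
From mathcomp.multinomials Require Import monalg.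
From mathcomp Require Import ring.
Set Implicit Arguments. Unset Strict Implicit. Unset Printing Implicit Defensive.
Import GRing.Theory.
Local Open Scope ring_scope.
Section S.
Variable A : finType.
Notation K := (fmonom A).
Notation M := {malg rat[K]}.
Lemma fmMM (u v : seq A) : mmul (FMonom u) (FMonom v) = FMonom (u ++ v).
Proof. by apply: val_inj; rewrite /= fmM. Qed.
Lemma malgUU (c d : rat) (k l : K) : << c *g k >> * << d *g l >> = << c * d *g mmul k l >> :> M.
Proof. by rewrite malgM_def fgmulUU. Qed.
Lemma fmEq (u v : seq A) : (FMonom u == FMonom v) = (u == v).
Proof. by rewrite fmP. Qed.

Lemma malg_ext (V : zmodType) (f g : M -> V) :
  {morph f : x y / x + y} -> {morph g : x y / x + y} ->
  (forall c k, f <<c *g k>> = g <<c *g k>>) -> forall X, f X = g X.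
Proof.
move=> fD gD h X; have E := monalgE X; rewrite E.
have f0: f 0 = 0 by apply/(addrI (f 0)); rewrite -fD !addr0.
have g0: g 0 = 0 by apply/(addrI (g 0)); rewrite -gD !addr0.
rewrite (big_morph f fD f0) (big_morph g gD g0).
by apply: eq_bigr => k _; exact: h.
Qed.

Definition cf (X : M) : ncpoly A := fun w => X@_(FMonom w).

Lemma mulrn_and (c d : rat) (b1 b2 : bool) : (c *+ b1) * (d *+ b2) = (c * d) *+ (b1 && b2).
Proof. by case: b1; case: b2; rewrite /= ?mulr0 ?mul0r. Qed.

Lemma sum_split (x : rat) (u v w : seq A) :
  \sum_(i < (size w).+1) x *+ ((u == take i w) && (v == drop i w)) = x *+ (u ++ v == w).
Proof.
case: (eqVneq (u ++ v) w) => [<-|ne].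
  have hu : (size u < (size (u ++ v)).+1)%N by rewrite ltnS size_cat leq_addr.
  rewrite (bigD1 (Ordinal hu)) //= take_size_cat // drop_size_cat // !eqxx /=.
  rewrite big1 ?addr0 // => i /eqP neq.
  case: andP => [[/eqP e _]|] //; exfalso; apply: neq; apply: val_inj => /=.
  have hs : size (take i (u ++ v)) = i.
    rewrite size_take; case: ifP => // /negbT; rewrite -leqNgt => h.
    by apply/eqP; rewrite eqn_leq h -ltnS ltn_ord.
  by rewrite -e in hs; rewrite hs.
rewrite big1 // => i _; case: andP => [[/eqP e1 /eqP e2]|] //.
by move: ne; rewrite e1 e2 cat_take_drop eqxx.
Qed.

Lemma cfM0 X Y w : cf (X * Y) w = ncmul (cf X) (cf Y) w.
Proof.
move: X; apply: (malg_ext (f := fun X => cf (X*Y) w) (g := fun X => ncmul (cf X) (cf Y) w)).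
- by move=> X1 X2 /=; rewrite /cf mulrDl mcoeffD.
- move=> X1 X2 /=; rewrite /ncmul /cf -big_split /=; apply: eq_bigr => i _.
  by rewrite mcoeffD mulrDl.
move=> c k; move: Y.
apply: (malg_ext (f := fun Y => cf (<<c *g k>> * Y) w) (g := fun Y => ncmul (cf <<c *g k>>) (cf Y) w)).
- by move=> X1 X2 /=; rewrite /cf mulrDr mcoeffD.
- move=> X1 X2 /=; rewrite /ncmul /cf -big_split /=; apply: eq_bigr => i _.
  by rewrite mcoeffD mulrDr.
move=> d l /=; rewrite malgUU /cf /ncmul mcoeffU.
case: k => u; case: l => v; rewrite fmMM fmEq.
rewrite -(sum_split (c * d) u v w); apply: eq_bigr => i _.
by rewrite !mcoeffU !fmEq mulrn_and.
Qed.

Lemma scaleU c d k : c *: << d *g k >> = << c * d *g k >> :> M.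
Proof. by apply/malgP => l; rewrite mcoeffZ !mcoeffU mulrnAr. Qed.

Lemma scalerAr' c (X Y : M) : X * (c *: Y) = c *: (X * Y).
Proof.
move: Y; apply: (malg_ext (f := fun Y => X * (c *: Y)) (g := fun Y => c *: (X * Y))).
- by move=> Y1 Y2 /=; rewrite scalerDr mulrDr.
- by move=> Y1 Y2 /=; rewrite mulrDr scalerDr.
move=> d l /=; rewrite scaleU; move: X.
apply: (malg_ext (f := fun X => X * <<c * d *g l>>) (g := fun X => c *: (X * <<d *g l>>))).
- by move=> Y1 Y2 /=; rewrite mulrDl.
- by move=> Y1 Y2 /=; rewrite mulrDl scalerDr.
by move=> e k /=; rewrite !malgUU scaleU mulrCA.
Qed.

Lemma zjac (V : zmodType) (p1 p2 p3 p4 p5 p6 : V) :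
  (p1 - p2 - (p3 - p4)) - ((p5 - p3) - (p2 - p6)) = (p1 - p5) - (p6 - p4).
Proof.
rewrite !opprB !addrA.
rewrite (ACl ((1*8*3*6)*((2*5)*(4*7)))%AC) /= !addNr !addr0.
by rewrite (ACl (1*2*4*3)%AC).
Qed.

Lemma jacR (R : ringType) (X Y Z : R) :
  X * (Y * Z - Z * Y) - (Y * Z - Z * Y) * X - (Y * (X * Z - Z * X) - (X * Z - Z * X) * Y)
  = (X * Y - Y * X) * Z - Z * (X * Y - Y * X).
Proof. rewrite !(mulrBr, mulrBl) !mulrA; exact: zjac. Qed.


Fact mul_key : unit. Proof. exact: tt. Qed.
Definition mulM : M -> M -> M := locked_with mul_key (fun X Y => X * Y).
Lemma mulME : mulM = (fun X Y => X * Y). Proof. exact: locked_withE. Qed.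
Fact sc_key : unit. Proof. exact: tt. Qed.
Definition scM : rat -> M -> M := locked_with sc_key (fun c X => c *: X).
Lemma scME : scM = (fun c X => c *: X). Proof. exact: locked_withE. Qed.

Lemma mulMDl X Y Z : mulM (X + Y) Z = mulM X Z + mulM Y Z.
Proof. rewrite mulME; exact: mulrDl. Qed.
Lemma mulMDr X Y Z : mulM Z (X + Y) = mulM Z X + mulM Z Y.
Proof. rewrite mulME; exact: mulrDr. Qed.
Lemma mulMBl X Y Z : mulM (X - Y) Z = mulM X Z - mulM Y Z.
Proof. rewrite mulME; exact: mulrBl. Qed.
Lemma mulMBr X Y Z : mulM Z (X - Y) = mulM Z X - mulM Z Y.
Proof. rewrite mulME; exact: mulrBr. Qed.
Lemma mulM0l X : mulM 0 X = 0.
Proof. rewrite mulME; exact: mul0r. Qed.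
Lemma mulM0r X : mulM X 0 = 0.
Proof. rewrite mulME; exact: mulr0. Qed.
Lemma mulMA X Y Z : mulM X (mulM Y Z) = mulM (mulM X Y) Z.
Proof. rewrite mulME; exact: mulrA. Qed.
Lemma mulMZl c X Y : mulM (scM c X) Y = scM c (mulM X Y).
Proof. rewrite mulME scME; exact: (esym (scalerAl _ _ _)). Qed.
Lemma mulMZr c X Y : mulM X (scM c Y) = scM c (mulM X Y).
Proof. rewrite mulME scME; exact: scalerAr'. Qed.
Lemma mulM_sumr X (I : Type) (r : seq I) (F : I -> M) :
  mulM X (\sum_(i <- r) F i) = \sum_(i <- r) mulM X (F i).
Proof. rewrite mulME; exact: mulr_sumr. Qed.
Lemma mulMUU (c d : rat) (k l : K) :
  mulM << c *g k >> << d *g l >> = << c * d *g mmul k l >>.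
Proof. rewrite mulME; exact: malgUU. Qed.

Lemma scMDr c X Y : scM c (X + Y) = scM c X + scM c Y.
Proof. rewrite scME; exact: scalerDr. Qed.
Lemma scMDl c d X : scM (c + d) X = scM c X + scM d X.
Proof. rewrite scME; exact: scalerDl. Qed.
Lemma scMA c d X : scM c (scM d X) = scM (c * d) X.
Proof. rewrite scME; exact: scalerA. Qed.
Lemma scM0 c : scM c 0 = 0.
Proof. rewrite scME; exact: scaler0. Qed.
Lemma scM0l X : scM 0 X = 0.
Proof. rewrite scME; exact: scale0r. Qed.
Lemma scM1 X : scM 1 X = X.
Proof. rewrite scME; exact: scale1r. Qed.
Lemma scMN1 X : scM (-1) X = - X.
Proof. rewrite scME; exact: scaleN1r. Qed.
Lemma scMN c X : scM c (- X) = - scM c X.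
Proof. rewrite scME; exact: scalerN. Qed.
Lemma scMBr c X Y : scM c (X - Y) = scM c X - scM c Y.
Proof. rewrite scME; exact: scalerBr. Qed.
Lemma scM_sumr c (I : Type) (r : seq I) (F : I -> M) :
  scM c (\sum_(i <- r) F i) = \sum_(i <- r) scM c (F i).
Proof. rewrite scME; exact: scaler_sumr. Qed.
Lemma scMU c d k : scM c << d *g k >> = << c * d *g k >>.
Proof. rewrite scME; exact: scaleU. Qed.
Lemma mcoeffS c X k : (scM c X)@_k = c * X@_k.
Proof. rewrite scME; exact: mcoeffZ. Qed.
Lemma msuppS c X : (msupp (scM c X) `<=` msupp X)%fset.
Proof. rewrite scME; exact: msuppZ_le. Qed.

Lemma cfM X Y w : cf (mulM X Y) w = ncmul (cf X) (cf Y) w.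
Proof. rewrite mulME; exact: cfM0. Qed.

Definition lin (F : K -> M) (X : M) : M := \sum_(k <- msupp X) scM X@_k (F k).

Lemma linEw F (d : {fset K}) X : (msupp X `<=` d)%fset -> lin F X = \sum_(k <- d) scM X@_k (F k).
Proof.
move=> le; rewrite /lin (big_fset_incl _ le) // => k _ /mcoeff_outdom ->.
by rewrite scM0l.
Qed.

Lemma linD F X Y : lin F (X + Y) = lin F X + lin F Y.
Proof.
rewrite (@linEw F (msupp X `|` msupp Y)%fset (X+Y)) ?msuppD_le //.
rewrite (@linEw F (msupp X `|` msupp Y)%fset X) ?fsubsetUl //.
rewrite (@linEw F (msupp X `|` msupp Y)%fset Y) ?fsubsetUr // -big_split.
by apply: eq_bigr => k _; rewrite mcoeffD scMDl.
Qed.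

Lemma linZ F c X : lin F (scM c X) = scM c (lin F X).
Proof.
rewrite (@linEw F (msupp X)) ?msuppS // /lin scM_sumr.
by apply: eq_bigr => k _; rewrite mcoeffS scMA.
Qed.

Lemma lin0 F : lin F 0 = 0.
Proof. by rewrite /lin msupp0 big_seq_fset0. Qed.

Lemma linN F X : lin F (- X) = - lin F X.
Proof. by rewrite -scMN1 linZ scMN1. Qed.

Lemma linB F X Y : lin F (X - Y) = lin F X - lin F Y.
Proof. by rewrite linD linN. Qed.

Lemma linU F c k : lin F <<c *g k>> = scM c (F k).
Proof. by rewrite (linEw _ msuppU_le) big_seq_fset1 mcoeffUU. Qed.

Lemma lin_sum F (I : Type) (r : seq I) (G : I -> M) :
  lin F (\sum_(i <- r) G i) = \sum_(i <- r) lin F (G i).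
Proof. exact: (big_morph _ (linD F) (lin0 F)). Qed.

Lemma mcoeff_lin F X k : (lin F X)@_k = \sum_(l <- msupp X) X@_l * (F l)@_k.
Proof. by rewrite /lin raddf_sum; apply: eq_bigr => l _ /=; exact: mcoeffS. Qed.

Definition L1 (x : A) : M := << FMonom [:: x] >>.
Definition br (X Y : M) : M := mulM X Y - mulM Y X.

Lemma brDr X Y Z : br X (Y + Z) = br X Y + br X Z.
Proof. by rewrite /br mulMDr mulMDl opprD addrACA. Qed.
Lemma brDl X Y Z : br (Y + Z) X = br Y X + br Z X.
Proof. by rewrite /br mulMDr mulMDl opprD addrACA. Qed.
Lemma brZr c X Y : br X (scM c Y) = scM c (br X Y).
Proof. by rewrite /br mulMZr mulMZl scMBr. Qed.
Lemma brZl c X Y : br (scM c X) Y = scM c (br X Y).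
Proof. by rewrite /br mulMZr mulMZl scMBr. Qed.
Lemma br0r X : br X 0 = 0.
Proof. by rewrite /br mulM0r mulM0l subrr. Qed.
Lemma br0l X : br 0 X = 0.
Proof. by rewrite /br mulM0r mulM0l subrr. Qed.
Lemma brNr X Y : br X (- Y) = - br X Y.
Proof. by rewrite -scMN1 brZr scMN1. Qed.
Lemma brNl X Y : br (- X) Y = - br X Y.
Proof. by rewrite -scMN1 brZl scMN1. Qed.
Lemma brBr X Y Z : br X (Y - Z) = br X Y - br X Z.
Proof. by rewrite brDr brNr. Qed.
Lemma brBl X Y Z : br (Y - Z) X = br Y X - br Z X.
Proof. by rewrite brDl brNl. Qed.
Lemma brC X Y : br X Y = - br Y X.
Proof. by rewrite /br opprB. Qed.

Lemma jacobi X Y Z : br X (br Y Z) - br Y (br X Z) = br (br X Y) Z.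
Proof. rewrite /br mulME; exact: jacR. Qed.

Fixpoint rhow (w : seq A) (Y : M) : M :=
  if w is x :: w' then br (L1 x) (rhow w' Y) else Y.

Lemma rhow_cat u v Y : rhow (u ++ v) Y = rhow u (rhow v Y).
Proof. by elim: u => //= x u ->. Qed.
Lemma rhowD w Y Z : rhow w (Y + Z) = rhow w Y + rhow w Z.
Proof. by elim: w => //= x w ->; rewrite brDr. Qed.
Lemma rhowZ w c Y : rhow w (scM c Y) = scM c (rhow w Y).
Proof. by elim: w => //= x w ->; rewrite brZr. Qed.
Lemma rhow0 w : rhow w 0 = 0.
Proof. by elim: w => //= x w ->; rewrite br0r. Qed.

Definition rho (X Y : M) : M := lin (fun k => rhow k Y) X.

Lemma rhoDr X Y Z : rho X (Y + Z) = rho X Y + rho X Z.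
Proof. by rewrite /rho /lin -big_split; apply: eq_bigr => k _; rewrite rhowD scMDr. Qed.
Lemma rhoZr X c Y : rho X (scM c Y) = scM c (rho X Y).
Proof. by rewrite /rho /lin scM_sumr; apply: eq_bigr => k _; rewrite rhowZ !scMA mulrC. Qed.
Lemma rho0r X : rho X 0 = 0.
Proof. by rewrite /rho /lin big1 // => k _; rewrite rhow0 scM0. Qed.
Lemma rho_sumr X (I : Type) (r : seq I) (F : I -> M) :
  rho X (\sum_(i <- r) F i) = \sum_(i <- r) rho X (F i).
Proof. exact: (big_morph _ (rhoDr X) (rho0r X)). Qed.
Lemma rhoDl X Y Z : rho (X + Y) Z = rho X Z + rho Y Z.
Proof. exact: linD. Qed.
Lemma rhoZl c X Z : rho (scM c X) Z = scM c (rho X Z).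
Proof. exact: linZ. Qed.
Lemma rhoBl X Y Z : rho (X - Y) Z = rho X Z - rho Y Z.
Proof. exact: linB. Qed.

Lemma rho_mul X Y Z : rho (mulM X Y) Z = rho X (rho Y Z).
Proof.
move: X; apply: (malg_ext (f := fun X => rho (mulM X Y) Z) (g := fun X => rho X (rho Y Z))).
- by move=> X1 X2 /=; rewrite mulMDl rhoDl.
- by move=> X1 X2 /=; rewrite rhoDl.
move=> c k; move: Y.
apply: (malg_ext (f := fun Y => rho (mulM <<c *g k>> Y) Z) (g := fun Y => rho <<c *g k>> (rho Y Z))).
- by move=> X1 X2 /=; rewrite mulMDr rhoDl.
- by move=> X1 X2 /=; rewrite rhoDl rhoDr.
move=> d l /=; rewrite mulMUU /rho !linU rhowZ scMA.
by case: k => u; case: l => v; rewrite fmMM rhow_cat.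
Qed.

Inductive LieM : M -> Prop :=
| LM_letter x : LieM (L1 x)
| LM0 : LieM 0
| LM_add X Y : LieM X -> LieM Y -> LieM (X + Y)
| LM_scale c X : LieM X -> LieM (scM c X)
| LM_br X Y : LieM X -> LieM Y -> LieM (br X Y).

Lemma rho_lie X : LieM X -> forall Z, rho X Z = br X Z.
Proof.
elim => {X} [x||X Y _ IHX _ IHY|c X _ IH|X Y _ IHX _ IHY] Z.
- by rewrite /rho /L1 linU scM1.
- by rewrite /rho lin0 br0l.
- by rewrite rhoDl IHX IHY brDl.
- by rewrite rhoZl IH brZl.
rewrite {1}/br rhoBl !rho_mul.
by rewrite !IHX !IHY jacobi.
Qed.

Lemma cf_nil_mul X Y : cf (mulM X Y) [::] = cf X [::] * cf Y [::].
Proof. by rewrite cfM /ncmul big_ord1. Qed.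

Lemma lie_nil X : LieM X -> X@_(FMonom [::]) = 0.
Proof.
elim => {X} [x||X Y _ IHX _ IHY|c X _ IH|X Y _ IHX _ IHY].
- by rewrite /L1 mcoeffU fmEq.
- by rewrite mcoeff0.
- by rewrite mcoeffD IHX IHY addr0.
- by rewrite mcoeffS IH mulr0.
have h1 := cf_nil_mul X Y; have h2 := cf_nil_mul Y X; rewrite /cf in h1 h2.
by rewrite /br mcoeffB h1 h2 IHX IHY mulr0 subrr.
Qed.


Fixpoint theta (w : seq A) : M :=
  match w with
  | [::] => 0
  | [:: x] => L1 x
  | x :: w' => br (L1 x) (theta w')
  end.

Lemma theta_cons x w : w != [::] -> theta (x :: w) = br (L1 x) (theta w).
Proof. by case: w. Qed.

Lemma theta_cat u v : v != [::] -> theta (u ++ v) = rhow u (theta v).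
Proof.
move=> nv; elim: u => [|x u IH]; first by [].
have nuv : u ++ v != [::] by case: u {IH} => //.
by rewrite cat_cons (theta_cons x nuv) IH.
Qed.

Lemma lie_theta w : LieM (theta w).
Proof.
elim: w => [|x w IH]; first exact: LM0.
case: w IH => [|y w] IH; first exact: LM_letter.
by rewrite theta_cons //; apply: LM_br => //; apply: LM_letter.
Qed.

Variable a : A.

Definition cnt (w : seq A) : nat := count (fun x => x != a) w.
Definition Th (w : seq A) : M := if last a w == a then 0 else theta w.

Lemma last_nonnil (y z : A) v : v != [::] -> last y v = last z v.
Proof. by case: v. Qed.

Lemma Th_cat u v : v != [::] -> Th (u ++ v) = rhow u (Th v).
Proof.
move=> nv; rewrite /Th last_cat (last_nonnil _ a nv).
by case: ifP => _; [rewrite rhow0 | rewrite theta_cat].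
Qed.

Definition ThX (X : M) : M := lin (fun k => Th k) X.

Lemma notin_nil (Y : M) l : Y@_(FMonom [::]) = 0 -> l \in msupp Y -> (l : seq A) != [::].
Proof.
move=> h; rewrite -mcoeff_neq0; apply: contra => /eqP e.
have -> : l = FMonom [::] by case: l e => /= s ->.
by rewrite h.
Qed.

Lemma Th_mul X Y : Y@_(FMonom [::]) = 0 -> ThX (mulM X Y) = rho X (ThX Y).
Proof.
move=> hY; move: X.
apply: (malg_ext (f := fun X => ThX (mulM X Y)) (g := fun X => rho X (ThX Y))).
- by move=> X1 X2 /=; rewrite mulMDl /ThX linD.
- by move=> X1 X2 /=; rewrite rhoDl.
move=> c k /=.
have E := monalgE Y; rewrite E mulM_sumr /ThX !lin_sum rho_sumr.
rewrite big_seq [RHS]big_seq; apply: eq_bigr => l hl.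
have nl := notin_nil hY hl.
rewrite mulMUU !linU /rho linU rhowZ scMA.
move: nl; case: k => u; case: l {hl} => v nv.
by rewrite fmMM Th_cat.
Qed.

Definition NB (X : M) : M := lin (fun k => scM (cnt k)%:R << 1 *g k >>) X.

Lemma NBD X Y : NB (X + Y) = NB X + NB Y. Proof. exact: linD. Qed.
Lemma NBB X Y : NB (X - Y) = NB X - NB Y. Proof. exact: linB. Qed.
Lemma NBZ c X : NB (scM c X) = scM c (NB X). Proof. exact: linZ. Qed.
Lemma NB0 : NB 0 = 0. Proof. exact: lin0. Qed.
Lemma ThXD X Y : ThX (X + Y) = ThX X + ThX Y. Proof. exact: linD. Qed.
Lemma ThXB X Y : ThX (X - Y) = ThX X - ThX Y. Proof. exact: linB. Qed.
Lemma ThXZ c X : ThX (scM c X) = scM c (ThX X). Proof. exact: linZ. Qed.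
Lemma ThX0 : ThX 0 = 0. Proof. exact: lin0. Qed.

Lemma mcoeff_NB X k : (NB X)@_k = (cnt k)%:R * X@_k.
Proof.
move: X; apply: (malg_ext (f := fun X => (NB X)@_k) (g := fun X => (cnt k)%:R * X@_k)).
- by move=> X1 X2 /=; rewrite NBD mcoeffD.
- by move=> X1 X2 /=; rewrite mcoeffD mulrDr.
move=> c l /=; rewrite /NB linU scMA mcoeffS !mcoeffU.
case: (eqVneq l k) => [->|_]; first by rewrite !mulrb /= mulr1 mulrC.
by rewrite !mulrb !mulr0.
Qed.

Lemma zmod_swap (V : zmodType) (p q r s : V) : (p + q) - (r + s) = (p - s) + (q - r).
Proof. by rewrite opprD (addrC (- r)) addrACA. Qed.

Lemma NB_mul X Y : NB (mulM X Y) = mulM (NB X) Y + mulM X (NB Y).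
Proof.
move: X; apply: (malg_ext (f := fun X => NB (mulM X Y)) (g := fun X => mulM (NB X) Y + mulM X (NB Y))).
- by move=> X1 X2 /=; rewrite mulMDl NBD.
- by move=> X1 X2 /=; rewrite NBD !mulMDl addrACA.
move=> c k; move: Y.
apply: (malg_ext (f := fun Y => NB (mulM <<c *g k>> Y)) (g := fun Y => mulM (NB <<c *g k>>) Y + mulM <<c *g k>> (NB Y))).
- by move=> Y1 Y2 /=; rewrite mulMDr NBD.
- by move=> Y1 Y2 /=; rewrite NBD !mulMDr addrACA.
move=> d l /=; rewrite mulMUU /NB !linU !scMU !mulMUU -monalgUD.
congr (<< _ *g _ >>).
case: k => u; case: l => v; rewrite fmMM /cnt count_cat natrD /=.
ring.
Qed.

Lemma NB_L1 x : NB (L1 x) = scM (x != a)%:R (L1 x).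
Proof.
rewrite /NB /L1 linU scM1.
have -> : cnt (FMonom [:: x]) = (x != a) by rewrite /cnt /= addn0.
by [].
Qed.

Lemma NB_br X Y : NB (br X Y) = br (NB X) Y + br X (NB Y).
Proof. by rewrite /br NBB !NB_mul zmod_swap. Qed.

Lemma NB_theta w : NB (theta w) = scM (cnt w)%:R (theta w).
Proof.
elim: w => [|x w IH]; first by rewrite NB0 scM0.
case: w IH => [|y w] IH.
  rewrite NB_L1.
  by have -> : cnt [:: x] = (x != a) by rewrite /cnt /= addn0.
rewrite theta_cons // NB_br NB_L1 IH brZl brZr -scMDl -natrD.
by [].
Qed.

Lemma NB_Th w : NB (Th w) = scM (cnt w)%:R (Th w).
Proof. by rewrite /Th; case: ifP => _; [rewrite NB0 scM0 | exact: NB_theta]. Qed.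

Lemma cnt0_last w y : y = a -> cnt w = 0%N -> last y w = a.
Proof.
elim: w y => [|x w IH] y ey; first by rewrite ey.
rewrite /cnt /=; case: (eqVneq x a) => [ex|nx] /= h; last by [].
exact: IH ex h.
Qed.

Lemma Th_coef w (k : K) : (Th w)@_k != 0 -> cnt k = cnt w /\ (0 < cnt w)%N.
Proof.
move=> nz; have h := f_equal (mcoeff k) (NB_Th w).
rewrite mcoeff_NB mcoeffS in h.
split.
  by apply/eqP; rewrite -(@Num.Theory.eqr_nat rat); apply/eqP; apply: (mulIf nz h).
rewrite lt0n; apply/negP => /eqP c0; move: nz.
by rewrite /Th (cnt0_last (erefl a) c0) eqxx mcoeff0 eqxx.
Qed.

Lemma lie_Th X : LieM X -> ThX X = NB X.
Proof.
elim => {X} [x||X Y hX IHX hY IHY|c X _ IH|X Y hX IHX hY IHY].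
- rewrite /ThX linU scM1 NB_L1 /Th.
  have -> : last a (FMonom [:: x] : seq A) = x by [].
  case: (eqVneq x a) => _; first by rewrite scM0l.
  by rewrite scM1.
- by rewrite ThX0 NB0.
- by rewrite ThXD NBD IHX IHY.
- by rewrite ThXZ NBZ IH.
have nX := lie_nil hX; have nY := lie_nil hY.
rewrite {1}/br ThXB (Th_mul _ nY) (Th_mul _ nX) (rho_lie hX) (rho_lie hY) IHX IHY NB_br.
by rewrite (brC Y) opprK addrC.
Qed.

Lemma ThX_L1a : ThX (L1 a) = 0.
Proof.
rewrite /ThX /L1 linU /Th.
by have -> : last a (FMonom [:: a] : seq A) = a by []; rewrite eqxx scM0.
Qed.

Lemma ThX_bra X : X@_(FMonom [::]) = 0 -> ThX (br (L1 a) X) = br (L1 a) (ThX X).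
Proof.
move=> nX; have nL := lie_nil (LM_letter a).
rewrite {1}/br ThXB (Th_mul _ nX) (rho_lie (LM_letter a)) (Th_mul _ nL) ThX_L1a.
by rewrite rho0r subr0.
Qed.

Lemma NB_bra X : NB (br (L1 a) X) = br (L1 a) (NB X).
Proof. by rewrite NB_br NB_L1 eqxx scM0l br0l add0r. Qed.

Lemma cfLl D x w : cf (mulM (L1 a) D) (x :: w) = (x == a)%:R * cf D w.
Proof.
move: D; apply: (malg_ext (f := fun D => cf (mulM (L1 a) D) (x :: w)) (g := fun D => (x == a)%:R * cf D w)).
- by move=> D1 D2 /=; rewrite /cf mulMDr mcoeffD.
- by move=> D1 D2 /=; rewrite /cf mcoeffD mulrDr.
move=> c k /=; rewrite /cf /L1 mulMUU !mcoeffU; case: k => u; rewrite fmMM !fmEq.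
rewrite cat1s eqseq_cons (eq_sym a x) mul1r !mulrb.
by case: (x == a); case: (u == w); rewrite /= ?mul1r ?mul0r.
Qed.

Lemma cfLr D x w : cf (mulM D (L1 a)) (rcons w x) = cf D w * (x == a)%:R.
Proof.
move: D; apply: (malg_ext (f := fun D => cf (mulM D (L1 a)) (rcons w x)) (g := fun D => cf D w * (x == a)%:R)).
- by move=> D1 D2 /=; rewrite /cf mulMDl mcoeffD.
- by move=> D1 D2 /=; rewrite /cf mcoeffD mulrDl.
move=> c k /=; rewrite /cf /L1 mulMUU !mcoeffU; case: k => u; rewrite fmMM !fmEq.
rewrite cats1 eqseq_rcons (eq_sym a x) mulr1 !mulrb.
by case: (x == a); case: (u == w); rewrite /= ?mulr1 ?mulr0.
Qed.

Lemma nseqSr j : nseq j.+1 a = rcons (nseq j a) a.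
Proof. by elim: j => //= j ->. Qed.

Lemma decomp w : all (pred1 a) w \/ exists s b j, b != a /\ w = s ++ b :: nseq j a.
Proof.
elim/last_ind: w => [|w x IH]; first by left.
case: (eqVneq x a) => [ex|nx]; last by right; exists w, x, 0%N; rewrite cats1.
case: IH => [al|[s [b [j [nb ->]]]]].
  by left; rewrite all_rcons /= ex eqxx al.
by right; exists s, b, j.+1; split => //; rewrite ex nseqSr rcons_cat rcons_cons.
Qed.

Lemma central D : br (L1 a) D = 0 -> (forall n, D@_(FMonom (nseq n a)) = 0) -> D = 0.
Proof.
move=> hc hn.
have E v : cf (mulM (L1 a) D) v = cf (mulM D (L1 a)) v.
  apply/eqP; rewrite -subr_eq0; apply/eqP.
  by rewrite /cf -mcoeffB -/(br (L1 a) D) hc mcoeff0.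
have h1 s b : b != a -> cf D (rcons s b) = 0.
  move=> nb; have := E (a :: rcons s b).
  by rewrite cfLl eqxx mul1r -rcons_cons cfLr (negbTE nb) mulr0.
have h2 j : forall s b, b != a -> cf D (s ++ b :: nseq j a) = 0.
  elim: j => [|j IH] s b nb; first by rewrite cats1; exact: h1.
  have := E (a :: rcons (s ++ b :: nseq j a) a).
  rewrite cfLl eqxx mul1r -rcons_cons cfLr eqxx mulr1 => e.
  rewrite nseqSr -rcons_cons -rcons_cat e.
  exact: (IH (a :: s) b nb).
apply/malgP => -[w]; rewrite mcoeff0.
case: (decomp w) => [/all_pred1P ->|[s [b [j [nb ->]]]]]; first exact: hn.
exact: h2.
Qed.

Lemma cnt0_nseq w : cnt w = 0%N -> w = nseq (size w) a.
Proof.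
elim: w => [|x w IH] //; rewrite /cnt /=; case: (eqVneq x a) => [->|] //= h.
by rewrite -IH.
Qed.

Lemma cnt_nseq n : cnt (nseq n a) = 0%N.
Proof. by rewrite /cnt count_nseq eqxx mul0n. Qed.

Lemma main_malg X : LieM (br (L1 a) X) -> (forall n, X@_(FMonom (nseq n a)) = 0) -> LieM X.
Proof.
move=> hL hn.
have n0 : X@_(FMonom [::]) = 0 := hn 0%N.
have hT : ThX X = NB X.
  apply/eqP; rewrite -subr_eq0; apply/eqP; apply: central.
    by rewrite brBr -ThX_bra // -NB_bra lie_Th // subrr.
  move=> n; rewrite mcoeffB mcoeff_NB hn mulr0 subr0 /ThX mcoeff_lin big1 // => l _ /=.
  have [->|nz] := eqVneq ((Th l)@_(FMonom (nseq n a))) 0; first by rewrite mulr0.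
  have [c1 c2] := Th_coef nz; exfalso; move: c1 c2.
  by rewrite [cnt _]cnt_nseq => <-.
pose Q := \sum_(l <- msupp X) scM (X@_l / (cnt l)%:R) (Th l).
have hQ : LieM Q.
  rewrite /Q; apply: big_ind => [|U V|l _]; [exact: LM0 | exact: LM_add |].
  apply: LM_scale; rewrite /Th; case: ifP => _; [exact: LM0 | exact: lie_theta].
suff -> : X = Q by [].
apply/malgP => k.
have eQ : Q@_k = \sum_(l <- msupp X) X@_l / (cnt l)%:R * (Th l)@_k.
  by rewrite /Q raddf_sum; apply: eq_bigr => l _ /=; exact: mcoeffS.
have eT : (ThX X)@_k = \sum_(l <- msupp X) X@_l * (Th l)@_k by rewrite /ThX mcoeff_lin.
rewrite hT mcoeff_NB in eT.
rewrite eQ.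
case: (posnP (cnt k)) => [c0|cpos].
  rewrite big1; last first.
    move=> l _; have [->|nz] := eqVneq ((Th l)@_k) 0; first by rewrite mulr0.
    by have [c1 c2] := Th_coef nz; move: c2; rewrite -c1 c0.
  by case: k c0 {eQ eT} => s /= c0; rewrite (cnt0_nseq c0) hn.
symmetry; transitivity (\sum_(l <- msupp X) X@_l * (Th l)@_k / (cnt k)%:R).
  apply: eq_bigr => l _.
  have [->|nz] := eqVneq ((Th l)@_k) 0; first by rewrite !mulr0 mul0r.
  by have [c1 _] := Th_coef nz; rewrite c1 mulrAC.
rewrite -big_distrl /= -eT mulrC mulKf //.
by rewrite Num.Theory.pnatr_eq0 -lt0n.
Qed.

Lemma cf_ext U V : (forall w, cf U w = cf V w) -> U = V.
Proof. by move=> h; apply/malgP => -[w]; exact: h w. Qed.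

Lemma ncmul_ext (P P' Q Q' : ncpoly A) w :
  (forall v, P v = P' v) -> (forall v, Q v = Q' v) -> ncmul P Q w = ncmul P' Q' w.
Proof. by move=> hP hQ; rewrite /ncmul; apply: eq_bigr => i _; rewrite hP hQ. Qed.

Lemma cfL1 x w : cf (L1 x) w = ncletter x w.
Proof. by rewrite /cf /L1 mcoeffU fmEq /ncletter eq_sym; case: eqP. Qed.

Lemma cf_br X Y w : cf (br X Y) w = ncbracket (cf X) (cf Y) w.
Proof.
have h1 := cfM X Y w; have h2 := cfM Y X w; rewrite /cf in h1 h2.
by rewrite /ncbracket /cf /br mcoeffB h1 h2.
Qed.

Lemma is_lie_cf X : LieM X -> is_lie (cf X).
Proof.
elim => {X} [x||X Y _ IHX _ IHY|c X _ IH|X Y _ IHX _ IHY].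
- by apply: lie_ext (lie_letter x) _ => w; rewrite cfL1.
- by apply: lie_ext (lie_zero A) _ => w; rewrite /cf mcoeff0.
- by apply: lie_ext (lie_add IHX IHY) _ => w; rewrite /ncadd /cf mcoeffD.
- by apply: lie_ext (lie_scale c IH) _ => w; rewrite /ncscale /cf mcoeffS.
- by apply: lie_ext (lie_bracket IHX IHY) _ => w; rewrite cf_br.
Qed.

Lemma cf_of_lie F : is_lie F -> exists X, LieM X /\ forall w, cf X w = F w.
Proof.
elim => [x||P Q _ [X [hX eX]] _ [Y [hY eY]]|c P _ [X [hX eX]]|P Q _ [X [hX eX]] _ [Y [hY eY]]|P Q _ [X [hX eX]] e].
- by exists (L1 x); split; [exact: LM_letter | exact: cfL1].
- by exists 0; split; [exact: LM0 | move=> w; rewrite /cf mcoeff0].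
- exists (X + Y); split; first exact: LM_add.
  by move=> w; rewrite /ncadd -eX -eY /cf mcoeffD.
- exists (scM c X); split; first exact: LM_scale.
  by move=> w; rewrite /ncscale -eX /cf mcoeffS.
- exists (br X Y); split; first exact: LM_br.
  by move=> w; rewrite cf_br /ncbracket (ncmul_ext w eX eY) (ncmul_ext w eY eX).
- by exists X; split => // w; rewrite -e.
Qed.

Lemma sum_pick (r : seq (seq A)) (f : seq A -> rat) v : uniq r ->
  \sum_(w <- r) f w *+ (w == v) = if v \in r then f v else 0.
Proof.
elim: r => [|x r IH]; first by rewrite big_nil.
move=> /= /andP [nx ur]; rewrite big_cons IH // in_cons [x == v]eq_sym.
case: (eqVneq v x) => [->|ne] /=; first by rewrite (negbTE nx) ?mulrb addr0.
by rewrite ?mulrb add0r.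
Qed.

Lemma lemma3_sec (P : ncpoly A) (hfin : ncfin P)
  (hcoef : forall k : nat, P (nseq k a) = 0)
  (hlie : is_lie (ncbracket (ncletter a) P)) : is_lie P.
Proof.
case: hfin => s hs.
pose X : M := \sum_(w <- undup s) << P w *g FMonom w >>.
have eX : forall v, cf X v = P v.
  move=> v; rewrite /cf /X raddf_sum /=.
  rewrite (eq_bigr (fun w => P w *+ (w == v))); last first.
    by move=> w _ /=; rewrite mcoeffU fmEq.
  rewrite sum_pick ?undup_uniq // mem_undup.
  by case: ifP => // /negbT /hs ->.
have hfc : forall n, X@_(FMonom (nseq n a)) = 0.
  by move=> n; have := eX (nseq n a); rewrite /cf => ->; exact: hcoef.
have [Y [hY eY]] := cf_of_lie hlie.
have eYX : Y = br (L1 a) X.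
  apply: cf_ext => w; rewrite eY cf_br /ncbracket.
  have eL := cfL1 a.
  by rewrite (ncmul_ext w eL eX) (ncmul_ext w eX eL).
rewrite eYX in hY.
exact: lie_ext (is_lie_cf (main_malg hY hfc)) eX.
Qed.
End S.

Theorem lemma3 (A : finType) (hA : (1 < #|A|)%N) (a : A) (P : ncpoly A)
  (hfin : ncfin P)
  (hcoef : forall k : nat, P (nseq k a) = 0)
  (hlie : is_lie (ncbracket (ncletter a) P)) :
  is_lie P.
Proof. exact: (lemma3_sec hfin hcoef hlie). Qed.
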